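(* (i) If $(S,* )$ is a free LD-system, there is no binary operation $\circ$ on $S$ such that $(S,*,\circ)$ is an ALD-system. (ii) A free ALD-system does not satisfy the law $x\circ y = (x*y)\circ x$; in particular it is not an LD-monoid.
   Context: An LD-system is a set with a binary operation $*$ satisfying $x*(y*z)=(x*y)*(x*z)$ (LD). An ALD-system is a set with two binary operations $*,\circ$ satisfying (LD), $x*(y*z)=(x\circ y)*z$ (ALD$_1$) and $x*(y\circ z)=(x*y)\circ(x*z)$ (ALD$_2$). An LD-monoid is an ALD-system in which moreover $\circ$ is associative with a unit and $x\circ y=(x*y)\circ x$ holds. Free LD-systems and free ALD-systems are the free algebras (of some rank $n\ge1$) in the varieties defined by these laws. *)

(* Defs.v *)
From mathcomp Require Import all_boot.
Set Implicit Arguments. Unset Strict Implicit. Unset Printing Implicit Defensive.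

Definition LD_law (S : Type) (st : S -> S -> S) : Prop :=
  forall x y z, st x (st y z) = st (st x y) (st x z).

Definition ALD_system (S : Type) (st circ : S -> S -> S) : Prop :=
  [/\ LD_law st,
      (forall x y z, st x (st y z) = st (circ x y) z)
    & (forall x y z, st x (circ y z) = circ (st x y) (st x z))].

Definition LD_monoid (S : Type) (st circ : S -> S -> S) : Prop :=
  [/\ ALD_system st circ,
      (forall x y z, circ x (circ y z) = circ (circ x y) z),
      (exists e, forall x, circ e x = x /\ circ x e = x)
    & (forall x y, circ x y = circ (st x y) x)].

Definition free_LD (n : nat) (S : Type) (st : S -> S -> S) (gen : 'I_n -> S) : Prop :=
  LD_law st /\
  forall (T : Type) (tst : T -> T -> T), LD_law tst ->
  forall g : 'I_n -> T,
    (exists h : S -> T, (forall x y, h (st x y) = tst (h x) (h y)) /\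
                        (forall i, h (gen i) = g i)) /\
    (forall h1 h2 : S -> T,
        (forall x y, h1 (st x y) = tst (h1 x) (h1 y)) -> (forall i, h1 (gen i) = g i) ->
        (forall x y, h2 (st x y) = tst (h2 x) (h2 y)) -> (forall i, h2 (gen i) = g i) ->
        forall x, h1 x = h2 x).

Definition free_ALD (n : nat) (S : Type) (st circ : S -> S -> S) (gen : 'I_n -> S) : Prop :=
  ALD_system st circ /\
  forall (T : Type) (tst tcirc : T -> T -> T), ALD_system tst tcirc ->
  forall g : 'I_n -> T,
    (exists h : S -> T, (forall x y, h (st x y) = tst (h x) (h y)) /\
                        (forall x y, h (circ x y) = tcirc (h x) (h y)) /\
                        (forall i, h (gen i) = g i)) /\
    (forall h1 h2 : S -> T,
        (forall x y, h1 (st x y) = tst (h1 x) (h1 y)) ->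
        (forall x y, h1 (circ x y) = tcirc (h1 x) (h1 y)) -> (forall i, h1 (gen i) = g i) ->
        (forall x y, h2 (st x y) = tst (h2 x) (h2 y)) ->
        (forall x y, h2 (circ x y) = tcirc (h2 x) (h2 y)) -> (forall i, h2 (gen i) = g i) ->
        forall x, h1 x = h2 x).

(* Main.v *)
Require Import Defs.
From mathcomp Require Import all_boot.

Theorem proposition1p5 :
  (forall (n : nat), 0 < n ->
     forall (S : Type) (st : S -> S -> S) (gen : 'I_n -> S),
       free_LD st gen -> ~ exists circ : S -> S -> S, ALD_system st circ) /\
  (forall (n : nat), 0 < n ->
     forall (S : Type) (st circ : S -> S -> S) (gen : 'I_n -> S),
       free_ALD st circ gen ->
       ~ (forall x y, circ x y = circ (st x y) x) /\ ~ LD_monoid st circ).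
Proof.
split.
- move=> n Hn S st gen [_ Hfree] [circ [_ A1 _]].
  have LDs : LD_law (fun _ y : nat => y.+1) by [].
  have [[h [Hh Hg]] _] := Hfree nat _ LDs (fun _ => 0).
  set g := gen (Ordinal Hn).
  have E := A1 g g g.
  have := congr1 h E.
  by rewrite !Hh /g Hg.
- move=> n Hn S st circ gen [_ Hfree].
  have AL : ALD_system (fun _ y : nat => y) (fun x _ => x.+1) by split.
  have [[h [Hs [Hc Hg]]] _] := Hfree nat _ _ AL (fun _ => 0).
  set g := gen (Ordinal Hn).
  have NL : ~ (forall x y, circ x y = circ (st x y) x).
    move=> L; have := congr1 h (L g (circ g g)).
    by rewrite !Hc !Hs !Hc /g Hg.
  split=> //.
  by case=> _ _ _ L; apply: NL.
Qed.
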